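(* Consider a cellular network with $n$ base stations $\mathcal{N}=\{1,\dots,n\}$, where base station $i$ serves a nonempty set $\mathcal{J}_i$ of users (pairwise disjoint sets), with channel gains $g_{kj}>0$ from base station $k$ to user $j$ and noise power $\sigma^2>0$. For $\mathbf{p}>\mathbf{0}$, $\mathbf{x}\ge\mathbf{0}$, $\mathbf{r}>\mathbf{0}$ define $$\mathrm{SINR}_{ij}(\mathbf{x},\mathbf{p})=\frac{p_i g_{ij}}{\sum_{k\ne i} p_k g_{kj} x_k+\sigma^2},\qquad f_i(\mathbf{x};\mathbf{r},\mathbf{p})=\sum_{j\in\mathcal{J}_i}\frac{r_{ij}}{\log(1+\mathrm{SINR}_{ij}(\mathbf{x},\mathbf{p}))}.$$ Fix a satisfiable rate vector $\mathbf{r}>\mathbf{0}$. If the full load $\mathbf{x}=\mathbf{1}$ is not implementable (for $\mathbf{r}$), then there is no other load $\mathbf{x}\le\mathbf{1}$ with $\mathbf{x}\ne\mathbf{1}$ that is implementable (for $\mathbf{r}$). Consequently, if full load is not implementable for the rate vector $\mathbf{d}_{\min}$, there is no feasible solution for Problem P0: $$\min_{\mathbf{p}>\mathbf{0},\ \mathbf{r}>\mathbf{0},\ \mathbf{0}<\mathbf{x}\le\mathbf{1}} \mathbf{x}^T\mathbf{p}\quad\text{s.t.}\quad \mathbf{x}=\mathbf{f}(\mathbf{x};\mathbf{r},\mathbf{p}),\quad \mathbf{r}\ge\mathbf{d}_{\min},$$ where $\mathbf{d}_{\min}>\mathbf{0}$ is given.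
   Context: Vector inequalities are componentwise; $\log$ is the natural logarithm. A rate vector $\mathbf{r}$ is satisfiable if $\rho(\mathbf{\Lambda}(\mathbf{r}))<1$, where $\rho$ denotes spectral radius and $\mathbf{\Lambda}(\mathbf{r})$ is the $n\times n$ matrix with entries $\lambda_{ii}=0$ and $\lambda_{ik}=\sum_{j\in\mathcal{J}_i} g_{kj}r_{ij}/g_{ij}$ for $i\ne k$. Given a satisfiable $\mathbf{r}$, a load vector $\mathbf{x}>\mathbf{0}$ is implementable if there exists a power vector $\mathbf{p}>\mathbf{0}$ such that $\mathbf{x}=\mathbf{f}(\mathbf{x};\mathbf{r},\mathbf{p})$. *)

(* Defs.v *)
From HB Require Import structures.
From mathcomp Require Import all_boot all_order all_algebra.
From mathcomp Require Import reals exp.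
From mathcomp.real_closed Require Import complex.
Set Implicit Arguments. Unset Strict Implicit. Unset Printing Implicit Defensive.
Import Order.TTheory GRing.Theory Num.Theory.
Local Open Scope ring_scope.

(* Conventions.
   - Base stations N = {1..n} are 'I_n; vectors over N are functions 'I_n -> R.
   - Users form a finite type U; serv j : 'I_n is the base station serving
     user j, so J_i = [set j | serv j == i].  The J_i are pairwise disjoint by
     construction; nonemptiness of each J_i is a hypothesis of the theorem.
   - Since every user belongs to exactly one J_i, the rate r_{ij} (j in J_i)
     is represented as r j, with r : U -> R.
   - g k j : channel gain from base station k to user j; sigma2 : noise power.
   - log is the natural logarithm [ln]. *)

Section Model.
Variables (R : realType) (n : nat) (U : finType).
Variables (serv : U -> 'I_n) (g : 'I_n -> U -> R) (sigma2 : R).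

Definition SINR (x p : 'I_n -> R) (i : 'I_n) (j : U) : R :=
  p i * g i j / (\sum_(k < n | k != i) p k * g k j * x k + sigma2).

Definition fload (x : 'I_n -> R) (r : U -> R) (p : 'I_n -> R) (i : 'I_n) : R :=
  \sum_(j | serv j == i) r j / ln (1 + SINR x p i j).

Definition Lambda (r : U -> R) : 'M[R]_n :=
  \matrix_(i, k) (if i == k then 0
                  else \sum_(j | serv j == i) g k j * r j / g i j).

Definition spectral_radius_lt1 (A : 'M[R]_n) : Prop :=
  forall z : R[i], eigenvalue (map_mx (real_complex R) A) z -> `|z| < 1.

Definition satisfiable (r : U -> R) : Prop := spectral_radius_lt1 (Lambda r).

Definition implementable (x : 'I_n -> R) (r : U -> R) : Prop :=
  (forall i, 0 < x i) /\
  exists p : 'I_n -> R, (forall i, 0 < p i) /\ (forall i, x i = fload x r p i).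

Definition P0_feasible (dmin : U -> R) (p : 'I_n -> R) (r : U -> R)
    (x : 'I_n -> R) : Prop :=
  [/\ forall i, 0 < p i, forall j, 0 < r j,
      forall i, 0 < x i /\ x i <= 1,
      forall i, x i = fload x r p i
    & forall j, dmin j <= r j].
End Model.

(* Main.v *)
Require Import Defs.
From HB Require Import structures.
From mathcomp Require Import all_boot all_order all_algebra.
From mathcomp Require Import reals exp.
From mathcomp.real_closed Require Import complex.
From mathcomp Require Import interval_inference ring lra boolp classical_sets topology normedtype convex.
Import Order.TTheory GRing.Theory Num.Theory.
Local Open Scope ring_scope.

Lemma ln_scale (R : realType) (x s : R) : 0 <= x -> x <= 1 -> 0 <= s ->
  x * ln (1 + s) <= ln (1 + x * s).
Proof.
move=> x0 x1 s0.
have := @concave_ln R (Itv01 x0 x1) (1 + s) 1 (ltr_wpDr s0 ltr01) ltr01.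
rewrite !convRE /= ln1 mulr0 addr0 => H.
apply: (le_trans H); rewrite /unstable.onem; rewrite le_eqVlt; apply/orP; left; apply/eqP; congr ln; ring.
Qed.
From mathcomp Require Import realfun.
Import numFieldTopology.Exports numFieldNormedType.Exports.

Lemma cont_sum (R : realType) (I : Type) (s : seq I) (P : pred I)
  (F : I -> R -> R) (t : R) :
  (forall j, P j -> {for t, continuous (F j)}) ->
  {for t, continuous (fun x => \sum_(j <- s | P j) F j x)}.
Proof.
move=> HF; elim: s => [|j s IH].
  under [X in {for t, continuous X}]funext do rewrite big_nil.
  exact: cvg_cst.
under [X in {for t, continuous X}]funext do rewrite big_cons.
case: (boolP (P j)) => Pj; last exact: IH.
exact: (continuousD (HF j Pj) IH).
Qed.

Lemma cont_term (R : realType) (a b d t : R) : 0 < b -> 0 < d -> 0 < t ->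
  {for t, continuous (fun x : R => a / ln (1 + x * b / d))}.
Proof.
move=> b0 d0 t0.
have u0 : 0 < t * b / d by rewrite divr_gt0 ?mulr_gt0.
apply: continuousM; first exact: cvg_cst.
apply: continuousV; first by rewrite gt_eqF // ln_gt0 // ltrDl.
apply: (@continuous_comp _ _ _ (fun x : R => 1 + x * b / d) (@ln R) t).
  apply: continuousD; first exact: cvg_cst.
  apply: continuousM; last exact: cvg_cst.
  apply: continuousM; last exact: cvg_cst.
  exact: cvg_id.
apply: continuous_ln. rewrite /=. lra.
Qed.

Lemma term_anti (R : realType) (a b d t1 t2 : R) : 0 < a -> 0 < b -> 0 < d ->
  0 < t1 -> t1 < t2 -> a / ln (1 + t2 * b / d) < a / ln (1 + t1 * b / d).
Proof.
move=> a0 b0 d0 t10 t12.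
have u1 : 0 < t1 * b / d by rewrite divr_gt0 ?mulr_gt0.
have u12 : t1 * b / d < t2 * b / d by rewrite ltr_pM2r ?invr_gt0 // ltr_pM2r.
have L1 : 0 < ln (1 + t1 * b / d) by rewrite ln_gt0 // ltrDl.
have L12 : ln (1 + t1 * b / d) < ln (1 + t2 * b / d).
  by rewrite ltr_ln ?posrE ?ltrD2l //; lra.
rewrite ltr_pM2l // ltf_pV2 ?posrE //; lra.
Qed.

Lemma term_mono (R : realType) (a b t d1 d2 : R) : 0 < a -> 0 < b -> 0 < t ->
  0 < d1 -> d1 <= d2 -> a / ln (1 + t * b / d1) <= a / ln (1 + t * b / d2).
Proof.
move=> a0 b0 t0 d10 d12.
have u2 : 0 < t * b / d2 by rewrite divr_gt0 ?mulr_gt0 //; lra.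
have u12 : t * b / d2 <= t * b / d1.
  by rewrite ler_pM2l ?mulr_gt0 // lef_pV2 ?posrE //; lra.
have L2 : 0 < ln (1 + t * b / d2) by rewrite ln_gt0 // ltrDl.
have L12 : ln (1 + t * b / d2) <= ln (1 + t * b / d1).
  by rewrite ler_ln ?posrE ?lerD2l //; lra.
rewrite ler_pM2l // lef_pV2 ?posrE //; lra.
Qed.

Lemma term_lower (R : realType) (a b t d s : R) : 0 < a -> 0 < b -> 0 < t ->
  0 < s -> s <= d -> t <= a * s / b -> 1 <= a / ln (1 + t * b / d).
Proof.
move=> a0 b0 t0 s0 sd ts.
have d0 : 0 < d by lra.
have u0 : 0 < t * b / d by rewrite divr_gt0 ?mulr_gt0.
have L0 : 0 < ln (1 + t * b / d) by rewrite ln_gt0 // ltrDl.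
rewrite ler_pdivlMr // mul1r.
apply: (le_trans (le_ln1Dx _)); first lra.
rewrite ler_pdivrMr //.
move: ts; rewrite ler_pdivlMr // => ts.
nra.
Qed.

Section Main.
Variables (R : realType) (n : nat) (U : finType).
Variables (serv : U -> 'I_n) (g : 'I_n -> U -> R) (sigma2 : R).
Hypothesis Hne : forall i : 'I_n, exists j : U, serv j = i.
Hypothesis Hg : forall k j, 0 < g k j.
Hypothesis Hs : 0 < sigma2.
Variable r : U -> R.
Hypothesis Hr : forall j, 0 < r j.

Definition upd (p : 'I_n -> R) (i : 'I_n) (t : R) : 'I_n -> R :=
  fun k => if k == i then t else p k.
Definition D (p : 'I_n -> R) (i : 'I_n) (j : U) : R :=
  \sum_(k < n | k != i) p k * g k j + sigma2.
Definition h (p : 'I_n -> R) (i : 'I_n) (t : R) : R :=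
  fload serv g sigma2 (fun _ => 1) r (upd p i t) i.

Lemma hE p i t :
  h p i t = \sum_(j | serv j == i) r j / ln (1 + t * g i j / D p i j).
Proof.
rewrite /h /fload; apply: eq_bigr => j _.
rewrite /SINR /upd eqxx /D; congr (_ / ln (1 + _ / (_ + _))).
by apply: eq_bigr => k /negbTE ->; rewrite mulr1.
Qed.

Lemma D_ge p i j : (forall k, 0 <= p k) -> sigma2 <= D p i j.
Proof.
move=> p0; rewrite /D lerDr; apply: sumr_ge0 => k _.
by rewrite mulr_ge0 // ltW.
Qed.

Lemma D_mono p q i j : (forall k, 0 <= p k) -> (forall k, p k <= q k) ->
  D p i j <= D q i j.
Proof.
move=> p0 pq; rewrite /D lerD2r; apply: ler_sum => k _.
by rewrite ler_pM2r.
Qed.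

Lemma h_anti p i t1 t2 : (forall k, 0 <= p k) -> 0 < t1 -> t1 < t2 ->
  h p i t2 < h p i t1.
Proof.
move=> p0 t10 t12; rewrite !hE.
have [j0 <-] := Hne i.
rewrite (bigD1 j0) //= [X in _ < X](bigD1 j0) //=.
apply: ltr_leD.
  apply: term_anti => //; apply: (lt_le_trans Hs); exact: D_ge.
apply: ler_sum => j /andP[/eqP Hj _].
rewrite le_eqVlt; apply/orP; right.
apply: term_anti => //; apply: (lt_le_trans Hs); exact: D_ge.
Qed.

Lemma h_mono p q i t : (forall k, 0 <= p k) -> (forall k, p k <= q k) ->
  0 < t -> h p i t <= h q i t.
Proof.
move=> p0 pq t0; rewrite !hE; apply: ler_sum => j /eqP Hj.
apply: term_mono => //; last exact: D_mono.
apply: (lt_le_trans Hs); exact: D_ge.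
Qed.

Lemma h_cont p i t : (forall k, 0 <= p k) -> 0 < t -> {for t, continuous (h p i)}.
Proof.
move=> p0 t0.
have -> : h p i = (fun x => \sum_(j <- index_enum U | serv j == i)
                       r j / ln (1 + x * g i j / D p i j)).
  by apply: funext => x; rewrite hE.
apply: cont_sum => j _; apply: cont_term => //.
apply: (lt_le_trans Hs); exact: D_ge.
Qed.

Lemma h_lower p i t : (forall k, 0 <= p k) -> 0 < t ->
  (forall j, serv j = i -> t <= r j * sigma2 / g i j) -> 1 <= h p i t.
Proof.
move=> p0 t0 Ht; rewrite hE.
have [j0 Hj0] := Hne i.
rewrite (bigD1 j0) /=; last by apply/eqP.
have : 0 <= \sum_(j | (serv j == i) && (j != j0)) r j / ln (1 + t * g i j / D p i j).
  apply: sumr_ge0 => j _; apply: divr_ge0; first exact: ltW.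
  apply: ln_ge0; rewrite lerDl; apply: divr_ge0; first by rewrite mulr_ge0 // ltW.
  apply: ltW; apply: (lt_le_trans Hs); exact: D_ge.
have : 1 <= r j0 / ln (1 + t * g i j0 / D p i j0).
  apply: (@term_lower R _ _ _ _ sigma2) => //; first exact: D_ge.
  exact: Ht.
lra.
Qed.

Lemma upd_id p i : upd p i (p i) = p.
Proof. by apply: funext => k; rewrite /upd; case: eqP => [->|]. Qed.

Lemma exists_small (s : seq U) (c : U -> R) (x : R) : 0 < x ->
  (forall j, 0 < c j) -> exists e, [/\ 0 < e, e <= x & forall j, j \in s -> e <= c j].
Proof.
move=> x0 c0; elim: s => [|j s [e [e0 ex He]]]; first by exists x; split.
exists (Num.min e (c j)); split.
- by rewrite lt_min e0 c0.
- by rewrite ge_min ex.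
- move=> k; rewrite in_cons => /orP[/eqP ->|ks]; first by rewrite ge_min lexx orbT.
  by rewrite ge_min He.
Qed.

Variable p' : 'I_n -> R.
Hypothesis Hp'0 : forall i, 0 < p' i.
Hypothesis Hp'1 : forall i, fload serv g sigma2 (fun _ => 1) r p' i <= 1.

Definition B (p : 'I_n -> R) := forall k, 0 <= p k /\ p k <= p' k.

Lemma T_ex p i : B p -> exists t, [/\ 0 < t, t <= p' i & h p i t = 1].
Proof.
move=> Bp; have p0 : forall k, 0 <= p k by move=> k; case: (Bp k).
have [e [e0 ep Hc]] := @exists_small (enum U) (fun j => r j * sigma2 / g i j) (p' i)
  (Hp'0 i) (fun j => divr_gt0 (mulr_gt0 (Hr j) Hs) (Hg i j)).
have flo : 1 <= h p i e.
  by apply: h_lower => // j _; apply: Hc; rewrite mem_enum.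
have fhi : h p i (p' i) <= 1.
  apply: (le_trans (@h_mono p p' i (p' i) p0 _ (Hp'0 i))); first by move=> k; case: (Bp k).
  by rewrite /h upd_id.
have [c cin hc] : exists2 c, c \in `[e, p' i] & h p i c = 1.
  apply: IVT => //.
    apply: continuous_in_subspaceT => x; rewrite inE /= in_itv /= => /andP[ex _].
    apply: h_cont => //; lra.
  by rewrite ge_min le_max fhi flo orbT.
move: cin; rewrite in_itv /= => /andP[ec cp].
exists c; split => //; lra.
Qed.

Definition T p i := xget 0 (fun t => [/\ 0 < t, t <= p' i & h p i t = 1]).

Lemma T_spec p i : B p -> [/\ 0 < T p i, T p i <= p' i & h p i (T p i) = 1].
Proof. by move=> Bp; apply: (@xgetPex R 0 (fun t => [/\ 0 < t, t <= p' i & h p i t = 1])); apply: T_ex. Qed.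

Lemma T_mono p q i : B p -> B q -> (forall k, p k <= q k) -> T p i <= T q i.
Proof.
move=> Bp Bq pq; have p0 : forall k, 0 <= p k by move=> k; case: (Bp k).
have [Tp0 _ hp] := T_spec p i Bp; have [Tq0 _ hq] := T_spec q i Bq.
rewrite leNgt; apply/negP => lt.
have := h_anti p i (T q i) (T p i) p0 Tq0 lt.
have := h_mono p q i (T q i) p0 pq Tq0.
lra.
Qed.

Lemma fixed_point : exists a : 'I_n -> R,
  (forall i, 0 < a i) /\ (forall i, fload serv g sigma2 (fun _ => 1) r a i = 1).
Proof.
pose Q := fun p => B p /\ forall i, T p i <= p i.
pose E := fun i (y : R) => exists p, Q p /\ y = p i.
pose a := fun i => inf (E i).
have Bp' : B p' by move=> k; split; [exact: ltW|].
have Qp' : Q p' by split => // i; have [] := T_spec p' i Bp'.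
have Ene : forall i, nonempty (E i) by move=> i; exists (p' i), p'.
have Elb : forall i, has_lbound (E i).
  by move=> i; exists 0 => y [p [[Bp _] ->]]; case: (Bp i).
have aleq : forall p, Q p -> forall i, a i <= p i.
  by move=> p Qp i; apply: ge_inf => //; exists p.
have Ba : B a.
  move=> k; split; last exact: aleq.
  by apply: lb_le_inf => // y [p [[Bp _] ->]]; case: (Bp k).
have BTa : B (T a) by move=> k; have [] := T_spec a k Ba; split => //; exact: ltW.
have Tale : forall i, T a i <= a i.
  move=> i; apply: lb_le_inf => // y [p [Qp ->]].
  apply: (le_trans (@T_mono a p i Ba (proj1 Qp) (aleq p Qp))); exact: (proj2 Qp).
have QTa : Q (T a).
  by split => // i; apply: T_mono.
have Ta : forall i, T a i = a i.
  by move=> i; apply/eqP; rewrite eq_le Tale aleq.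
exists a; split => i; first by rewrite -Ta; have [] := T_spec a i Ba.
by have [_ _] := T_spec a i Ba; rewrite Ta /h upd_id.
Qed.

End Main.

Lemma reduce (R : realType) (n : nat) (U : finType)
  (serv : U -> 'I_n) (g : 'I_n -> U -> R) (sigma2 : R)
  (Hg : forall (k : 'I_n) (j : U), 0 < g k j) (Hs : 0 < sigma2)
  (x p : 'I_n -> R) (r d : U -> R) :
  (forall j, 0 < d j) -> (forall j, d j <= r j) ->
  (forall i, 0 < x i /\ x i <= 1) -> (forall i, 0 < p i) ->
  (forall i, x i = fload serv g sigma2 x r p i) ->
  forall i, fload serv g sigma2 (fun _ => 1) d (fun k => p k * x k) i <= 1.
Proof.
move=> d0 dr x01 p0 Hx i.
have [xi0 xi1] := x01 i.
apply: (@le_trans _ _ (\sum_(j | serv j == i) r j / ln (1 + SINR g sigma2 x p i j) / x i)).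
  apply: ler_sum => j _.
  have E : SINR g sigma2 (fun _ => 1) (fun k => p k * x k) i j
           = x i * SINR g sigma2 x p i j.
    rewrite /SINR.
    have -> : \sum_(k < n | k != i) p k * x k * g k j * 1
              = \sum_(k < n | k != i) p k * g k j * x k.
      by apply: eq_bigr => k _; rewrite mulr1 -!mulrA [x k * _]mulrC.
    by rewrite !mulrA [x i * p i]mulrC -!mulrA [x i * _]mulrC.
  rewrite E.
  have s0 : 0 < SINR g sigma2 x p i j.
    rewrite /SINR divr_gt0 ?mulr_gt0 //.
    apply: (lt_le_trans Hs); rewrite lerDr; apply: sumr_ge0 => k _.
    by rewrite !mulr_ge0 // ltW //; case: (x01 k).
  set s := SINR g sigma2 x p i j in s0 *.
  have L0 : 0 < ln (1 + s) by rewrite ln_gt0 // ltrDl.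
  have A : x i * ln (1 + s) <= ln (1 + x i * s) by apply: ln_scale => //; exact: ltW.
  have xL : 0 < x i * ln (1 + s) by rewrite mulr_gt0.
  apply: (@le_trans _ _ (d j / (x i * ln (1 + s)))).
    by rewrite ler_wpM2l ?(ltW (d0 j)) // lef_pV2 ?posrE //; lra.
  apply: (@le_trans _ _ (r j / (x i * ln (1 + s)))).
    by rewrite ler_wpM2r // invr_ge0 ltW.
  by rewrite [x i * _]mulrC invfM mulrA.
rewrite -mulr_suml.
have -> : \sum_(j | serv j == i) r j / ln (1 + SINR g sigma2 x p i j)
          = fload serv g sigma2 x r p i by [].
by rewrite -Hx divff // gt_eqF.
Qed.

Lemma full_impl (R : realType) (n : nat) (U : finType)
  (serv : U -> 'I_n) (g : 'I_n -> U -> R) (sigma2 : R)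
  (Hnonempty : forall i : 'I_n, exists j : U, serv j = i)
  (Hg : forall (k : 'I_n) (j : U), 0 < g k j)
  (Hsigma : 0 < sigma2) (r : U -> R) (p' : 'I_n -> R) :
  (forall j, 0 < r j) -> (forall i, 0 < p' i) ->
  (forall i, fload serv g sigma2 (fun _ => 1) r p' i <= 1) ->
  implementable serv g sigma2 (fun _ => 1) r.
Proof.
move=> Hr Hp0 Hp1.
have [a [a0 Ha]] := @fixed_point R n U serv g sigma2 Hnonempty Hg Hsigma r Hr p' Hp0 Hp1.
split => //; exists a; split => // i; by rewrite Ha.
Qed.

Theorem corollary1 (R : realType) (n : nat) (U : finType)
  (serv : U -> 'I_n) (g : 'I_n -> U -> R) (sigma2 : R)
  (Hnonempty : forall i : 'I_n, exists j : U, serv j = i)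
  (Hg : forall (k : 'I_n) (j : U), 0 < g k j)
  (Hsigma : 0 < sigma2) :
  (forall r : U -> R, (forall j, 0 < r j) -> satisfiable serv g r ->
     ~ implementable serv g sigma2 (fun _ => 1) r ->
     forall x : 'I_n -> R, (forall i, x i <= 1) -> x <> (fun _ => 1) ->
       ~ implementable serv g sigma2 x r)
  /\
  (forall dmin : U -> R, (forall j, 0 < dmin j) -> satisfiable serv g dmin ->
     ~ implementable serv g sigma2 (fun _ => 1) dmin ->
     ~ exists (p : 'I_n -> R) (r : U -> R) (x : 'I_n -> R),
         P0_feasible serv g sigma2 dmin p r x).
Proof.
split.
  move=> r Hr _ Hnot x x1 _ [x0 [p [p0 Hx]]]; apply: Hnot.
  apply: (@full_impl R n U serv g sigma2 Hnonempty Hg Hsigma r (fun k => p k * x k)) => //.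
    by move=> i; rewrite mulr_gt0.
  apply: (@reduce R n U serv g sigma2 Hg Hsigma x p r r) => //.
move=> dmin Hd _ Hnot [p [r [x [p0 r0 x01 Hx dr]]]]; apply: Hnot.
apply: (@full_impl R n U serv g sigma2 Hnonempty Hg Hsigma dmin (fun k => p k * x k)) => //.
  by move=> i; rewrite mulr_gt0 //; case: (x01 i).
exact: (@reduce R n U serv g sigma2 Hg Hsigma x p r dmin).
Qed.
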